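(* Let $n \ge k \ge 1$ be integers, let $G$ be a simple undirected graph on $n$ vertices, and let $P_1,\ldots,P_k$ be vertex-disjoint directed paths in $G$ covering $V(G)$ such that the digraph $D(G,P_1,\ldots,P_k)$ is acyclic. Then $\lvert E(G)\rvert \le kn - \binom{k+1}{2}$. Equivalently, $\Gamma(n,k) \le kn - \binom{k+1}{2}$.
   Context: $y \sim z$ means $y$ and $z$ are adjacent in $G$. A directed path in $G$ is a sequence $v_1 \to \cdots \to v_m$ ($m \ge 1$) of distinct vertices with $v_tv_{t+1} \in E(G)$; its arcs are $v_t \to v_{t+1}$. Vertex-disjoint and covering means every vertex lies in exactly one $P_j$. The digraph $D = D(G,P_1,\ldots,P_k)$ has vertex set $V(G)$, and for distinct $x,y$ there is an arc $x \to y$ iff either some $P_j$ contains the arc $x \to y$, or there is a vertex $z$ and a path $P_j$ with $x \to z$ an arc of $P_j$ and $y \sim z$. $\Gamma(n,k)$ is the maximum of $\lvert E(G)\rvert$ over all such $G$ on $n$ vertices with $k$ such paths for which $D$ is acyclic. *)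

(* Defs.v *)
From mathcomp Require Import all_boot.
Set Implicit Arguments. Unset Strict Implicit. Unset Printing Implicit Defensive.

Definition simple_graph (T : finType) (e : rel T) : Prop :=
  symmetric e /\ irreflexive e.

Definition edges (T : finType) (e : rel T) : {set {set T}} :=
  [set A : {set T} | [exists x, exists y, e x y && (A == [set x; y])]].

Definition arc (T : eqType) (s : seq T) (x y : T) : bool :=
  (x, y) \in zip s (behead s).

Definition dpath (T : finType) (e : rel T) (s : seq T) : Prop :=
  s != [::] /\ uniq s /\ (forall x y, arc s x y -> e x y).

Definition Darc (T : finType) (e : rel T) (k : nat) (P : 'I_k -> seq T)
    (x y : T) : bool :=
  (x != y) &&
  [exists j : 'I_k, arc (P j) x y || [exists z, arc (P j) x z && e y z]].

Definition acyclic (T : finType) (r : rel T) : Prop :=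
  forall x y, r x y -> ~~ connect r y x.

(* Main.v *)
Require Import Defs.
From mathcomp Require Import all_boot.
From mathcomp Require Import zify.
Set Implicit Arguments. Unset Strict Implicit. Unset Printing Implicit Defensive.

Definition gsum (k m : nat) := \sum_(i < m) minn k i.

Lemma gsum_small k m : m <= k -> gsum k m = 'C(m, 2).
Proof.
elim: m => [|m IH] Hm; first by rewrite /gsum big_ord0.
rewrite /gsum big_ord_recr /= -/(gsum k m) IH; last lia.
rewrite binS bin1; lia.
Qed.

Lemma bin_sq k : 'C(k, 2) + 'C(k.+1, 2) = k * k.
Proof.
elim: k => [|k IH] //.
have := binS k.+1 1; have := binS k 1; rewrite !bin1; lia.
Qed.

Lemma gsum_big k n : k <= n -> gsum k n + 'C(k.+1, 2) = k * n.
Proof.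
elim: n => [|n IH] Hk.
  have Ek : k = 0 by move: Hk; rewrite leqn0 => /eqP.
  by rewrite Ek /gsum big_ord0.
have [Ek|Hkn] := eqVneq k n.+1.
  rewrite Ek gsum_small // bin_sq //.
rewrite /gsum big_ord_recr /= -/(gsum k n).
have := IH ltac:(lia). lia.
Qed.

Definition dhgt (T : finType) (r : rel T) (v : T) := #|[set u | connect r u v]|.
Definition dkey (T : finType) (r : rel T) (v : T) := dhgt r v * #|T| + enum_rank v.

Lemma hgt_lt (T : finType) (r : rel T) : acyclic r ->
  forall x y, r x y -> dhgt r x < dhgt r y.
Proof.
move=> ac x y rxy; apply: proper_card; apply/properP; split.
  apply/subsetP=> u; rewrite !inE => cu; exact: connect_trans cu (connect1 rxy).
exists y; rewrite !inE ?connect0 //; exact: ac.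
Qed.

Lemma key_lt (T : finType) (r : rel T) : acyclic r ->
  forall x y, r x y -> dkey r x < dkey r y.
Proof.
move=> ac x y rxy; have H := hgt_lt ac rxy.
rewrite /dkey.
have := ltn_ord (enum_rank x).
have : (dhgt r x).+1 * #|T| <= dhgt r y * #|T| by apply: leq_mul.
move: (dhgt r x) (dhgt r y) (#|T|) (nat_of_ord (enum_rank x)) (nat_of_ord (enum_rank y)) => a b N u w.
nia.
Qed.

Lemma key_inj (T : finType) (r : rel T) : injective (dkey r).
Proof.
move=> x y; rewrite /dkey => E.
have := ltn_ord (enum_rank x); have := ltn_ord (enum_rank y).
have [H|H|H] := ltngtP (dhgt r x) (dhgt r y).
- have : (dhgt r x).+1 * #|T| <= dhgt r y * #|T| by apply: leq_mul.
  move: E; move: (dhgt r x) (dhgt r y) (#|T|) (nat_of_ord (enum_rank x)) (nat_of_ord (enum_rank y)) => a b N u w.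
  nia.
- have : (dhgt r y).+1 * #|T| <= dhgt r x * #|T| by apply: leq_mul.
  move: E; move: (dhgt r x) (dhgt r y) (#|T|) (nat_of_ord (enum_rank x)) (nat_of_ord (enum_rank y)) => a b N u w.
  nia.
- move=> _ _; rewrite H in E; apply: enum_rank_inj; apply: ord_inj; exact: addnI E.
Qed.

Lemma sum_min (T : finType) (f : T -> nat) (finj : injective f) k :
  forall m (A : {set T}), #|A| = m ->
  \sum_(v in A) minn k #|[set w in A | f v < f w]| = gsum k m.
Proof.
elim=> [|m IH] A HA.
  move/eqP: HA; rewrite cards_eq0 => /eqP ->.
  by rewrite big_set0 /gsum big_ord0.
have [x0 Hx0] : exists x, x \in A.
  by apply/set0Pn; rewrite -card_gt0 HA.
case: (arg_minnP f Hx0) => a Ha0 amin.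
have Ha : a \in A by exact: Ha0.
rewrite (bigD1 a) //=.
have E1 : [set w in A | f a < f w] = A :\ a.
  apply/setP=> w; rewrite !inE.
  case: (eqVneq w a) => [->|wa] /=; first by rewrite ltnn andbF.
  case Hw: (w \in A) => //=.
  have := amin w Hw; rewrite leq_eqVlt => /orP [/eqP E|] //.
  by move: (finj _ _ E) wa => -> ; rewrite eqxx.
have HAa : #|A :\ a| = m by move: HA; rewrite (cardsD1 a A) Ha add1n; case.
rewrite E1 HAa.
rewrite (eq_bigl (fun v => v \in A :\ a)); last first.
  by move=> v; rewrite !inE andbC.
rewrite (eq_bigr (fun v => minn k #|[set w in A :\ a | f v < f w]|)); last first.
  move=> v; rewrite !inE => /andP [va vA]; congr minn; apply: eq_card => w.
  rewrite !inE.
  case: (eqVneq w a) => [->|wa] //=.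
  rewrite Ha /=; apply/negbTE; rewrite -leqNgt; exact: amin.
rewrite IH // /gsum big_ord_recr /= addnC.
by [].
Qed.

Lemma arc_nth (T : eqType) (s : seq T) x0 i :
  i.+1 < size s -> Defs.arc s (nth x0 s i) (nth x0 s i.+1).
Proof.
move=> Hi; rewrite /Defs.arc -(nth_behead x0).
have -> : (nth x0 s i, nth x0 (behead s) i) = nth (x0, x0) (zip s (behead s)) i.
  rewrite nth_zip_cond size_zip size_behead ifT //; lia.
apply: mem_nth; rewrite size_zip size_behead; lia.
Qed.

Lemma darc_path (T : finType) (e : rel T) k (P : 'I_k -> seq T) j x0 i :
  dpath e (P j) -> i.+1 < size (P j) ->
  Darc e P (nth x0 (P j) i) (nth x0 (P j) i.+1).
Proof.
case=> _ [u _] Hi; apply/andP; split.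
  rewrite nth_uniq //; [lia | exact: ltnW].
by apply/existsP; exists j; rewrite arc_nth.
Qed.

Lemma key_path (T : finType) (e : rel T) k (P : 'I_k -> seq T) j x0 :
  acyclic (Darc e P) -> dpath e (P j) ->
  forall d i, i + d.+1 < size (P j) ->
  dkey (Darc e P) (nth x0 (P j) i) < dkey (Darc e P) (nth x0 (P j) (i + d.+1)).
Proof.
move=> ac dp; elim=> [|d IH] i H.
  rewrite addn1; apply: (key_lt ac); apply: darc_path dp _; lia.
apply: ltn_trans (IH i _) _; first lia.
rewrite (addnS i d.+1); apply: (key_lt ac); apply: darc_path dp _; lia.
Qed.

Lemma key_path_le (T : finType) (e : rel T) k (P : 'I_k -> seq T) j x0 i i' :
  acyclic (Darc e P) -> dpath e (P j) -> i <= i' -> i' < size (P j) ->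
  dkey (Darc e P) (nth x0 (P j) i) <= dkey (Darc e P) (nth x0 (P j) i').
Proof.
move=> ac dp H1 H2; rewrite leq_eqVlt in H1; case/orP: H1 => [/eqP -> //|H1].
have -> : i' = i + (i' - i).-1.+1 by lia.
apply: ltnW; apply: key_path => //; lia.
Qed.

Lemma no_two (T : finType) (e : rel T) k (P : 'I_k -> seq T) j v w1 w2 :
  acyclic (Darc e P) -> dpath e (P j) ->
  w1 \in P j -> w2 \in P j -> index w1 (P j) < index w2 (P j) -> e v w2 ->
  dkey (Darc e P) v < dkey (Darc e P) w1 -> False.
Proof.
move=> ac dp H1 H2 Hi evw Hk.
have Hs : index w2 (P j) < size (P j) by rewrite index_mem.
set x := nth w1 (P j) (index w2 (P j)).-1.
have kx : dkey (Darc e P) w1 <= dkey (Darc e P) x.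
  rewrite -{1}(nth_index w1 H1); apply: key_path_le => //; lia.
have arcx : Defs.arc (P j) x w2.
  have E : (index w2 (P j)).-1.+1 = index w2 (P j) by lia.
  have := arc_nth w1 (s := P j) (i := (index w2 (P j)).-1); rewrite E (nth_index w1 H2); apply; exact: Hs.
have Dxv : Darc e P x v.
  apply/andP; split.
    apply/eqP => E2; rewrite E2 in kx; lia.
  apply/existsP; exists j; apply/orP; right; apply/existsP; exists w2.
  by rewrite arcx evw.
have := key_lt ac Dxv; lia.
Qed.

Theorem lemma2 (n k : nat) (T : finType) (e : rel T) (P : 'I_k -> seq T) :
  1 <= k -> k <= n -> #|T| = n ->
  simple_graph e ->
  (forall j, dpath e (P j)) ->
  (forall v : T, exists j, v \in P j) ->
  (forall (v : T) (i j : 'I_k), v \in P i -> v \in P j -> i = j) ->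
  acyclic (Darc e P) ->
  #|edges e| <= k * n - 'C(k.+1, 2).
Proof.
move=> hk hkn hT [esym eirr] dp cover disj ac.
set D := Darc e P.
set f := dkey D.
have finj : injective f := @key_inj T D.
pose L v := [set w | e v w && (f v < f w)].
pose S := [set p : T * T | e p.1 p.2 && (f p.1 < f p.2)].
have step1 : #|edges e| <= \sum_v #|L v|.
  have sub : edges e \subset [set [set p.1; p.2] | p in S].
    apply/subsetP => A; rewrite inE => /existsP [x /existsP [y /andP [exy /eqP ->]]].
    have xy : x != y by apply/eqP => E; move: exy; rewrite E eirr.
    have fxy : f x != f y by apply: contra xy => /eqP /finj ->.
    case: (ltngtP (f x) (f y)) => H.
    - by apply/imsetP; exists (x, y); rewrite // inE /= exy H.
    - apply/imsetP; exists (y, x); last by rewrite setUC.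
      by rewrite inE /= esym exy H.
    - by rewrite H eqxx in fxy.
  apply: leq_trans (subset_leq_card sub) _.
  apply: leq_trans (leq_imset_card _ _) _.
  rewrite -sum1_card big_mkcond /=.
  rewrite (eq_bigr (fun p : T * T => nat_of_bool (e p.1 p.2 && (f p.1 < f p.2)))); last first.
    by move=> p _; rewrite inE; case: ifP.
  rewrite -(pair_big xpredT xpredT (fun v w => nat_of_bool (e v w && (f v < f w)))) /=.
  apply: leq_sum => v _.
  apply: eq_leq; rewrite -sum1_card [RHS]big_mkcond /=.
  apply: eq_bigr => w _; rewrite inE; by case: ifP.
pose j0 : 'I_k := Ordinal hk.
pose idx w := odflt j0 [pick j | w \in P j].
have Hidx : forall w, w \in P (idx w).
  move=> w; rewrite /idx; case: pickP => [j //|H].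
  case: (cover w) => j Hj; by rewrite H in Hj.
have step2 : forall v, #|L v| <= minn k #|[set w in [set: T] | f v < f w]|.
  move=> v; rewrite leq_min; apply/andP; split.
    have inj : {in L v &, injective idx}.
      move=> w1 w2; rewrite !inE => /andP [e1 k1] /andP [e2 k2] Hid.
      have H1 := Hidx w1; have H2 := Hidx w2; rewrite -Hid in H2.
      have [Hl|Hl|Hl] := ltngtP (index w1 (P (idx w1))) (index w2 (P (idx w1))).
      - by case: (no_two ac (dp _) H1 H2 Hl e2 k1).
      - by case: (no_two ac (dp _) H2 H1 Hl e1 k2).
      - by rewrite -(nth_index w1 H1) Hl (nth_index w1 H2).
    rewrite -(card_in_imset inj).
    apply: leq_trans (max_card _) _; by rewrite card_ord.
  apply: subset_leq_card; apply/subsetP => w; rewrite !inE => /andP [_ ->]; by [].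
have step3 : \sum_v minn k #|[set w in [set: T] | f v < f w]| = gsum k n.
  rewrite -(sum_min finj k (A := [set: T])); last by rewrite cardsT.
  by apply: eq_bigl => v; rewrite inE.
have := gsum_big hkn.
have : \sum_v #|L v| <= gsum k n by rewrite -step3; apply: leq_sum => v _; exact: step2.
lia.
Qed.
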